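(* Let $H$ be a Hilbert space, let $T$ be a densely defined closed operator on $H$ with closed range, and let $S\in B(H)$ be an EP operator. If $R(S)=R(T)$, then $w(ST)=w(S)w(T)$.
   Context: $B(H)$ is the set of bounded operators on $H$. A densely defined closed operator $A$ on $H$ is EP if $R(A)$ is closed and $R(A)=R(A^{*})$. For a densely defined closed operator $A$ with closed range, $C(A)=D(A)\cap N(A)^{\perp}$, and the Moore–Penrose inverse $A^{\dagger}$ is defined on $R(A)\oplus^{\perp}R(A)^{\perp}$ by $A^{\dagger}y=(A|_{C(A)})^{-1}y$ for $y\in R(A)$ and $A^{\dagger}y=0$ for $y\in R(A)^{\perp}$. The generalized Cauchy dual is $w(A)=A(A^{*}A)^{\dagger}$ (products on natural domains). *)

(* Defs.v *)
From HB Require Import structures.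
From mathcomp Require Import all_boot all_order all_algebra.
From mathcomp Require Import reals complex.
From Stdlib Require Import ClassicalEpsilon.

Set Implicit Arguments.
Unset Strict Implicit.
Unset Printing Implicit Defensive.

Import Order.TTheory GRing.Theory Num.Theory.
Local Open Scope ring_scope.
Local Open Scope complex_scope.

Section Hilbert.
Variables (R : realType) (H : lmodType R[i]) (ip : H -> H -> R[i]).

Definition is_inner_product : Prop :=
  [/\ (forall (a : R[i]) (x y z : H), ip (a *: x + y) z = a * ip x z + ip y z),
      (forall x y : H, ip y x = (ip x y)^*),
      (forall x : H, 0 <= complex.Re (ip x x)) &
      (forall x : H, ip x x = 0 -> x = 0)].

Definition hnorm (x : H) : R := Num.sqrt (complex.Re (ip x x)).

Definition seq_cvg (u : nat -> H) (x : H) : Prop :=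
  forall e : R, 0 < e -> exists N : nat, forall n, (N <= n)%N -> hnorm (u n - x) < e.

Definition cauchy_seq (u : nat -> H) : Prop :=
  forall e : R, 0 < e -> exists N : nat, forall m n, (N <= m)%N -> (N <= n)%N ->
    hnorm (u m - u n) < e.

Definition complete_ip : Prop :=
  forall u, cauchy_seq u -> exists x, seq_cvg u x.

Definition is_Hilbert : Prop := is_inner_product /\ complete_ip.

Definition closed_set (S : H -> Prop) : Prop :=
  forall u x, (forall n, S (u n)) -> seq_cvg u x -> S x.

Definition dense_set (S : H -> Prop) : Prop :=
  forall x, exists u, (forall n, S (u n)) /\ seq_cvg u x.

Definition subspace (S : H -> Prop) : Prop :=
  S 0 /\ forall (a : R[i]) x y, S x -> S y -> S (a *: x + y).

Definition orth (S : H -> Prop) : H -> Prop :=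
  fun x => forall y, S y -> ip y x = 0.

Definition set_eq (S1 S2 : H -> Prop) : Prop := forall x, S1 x <-> S2 x.

(** (possibly unbounded) operators: a domain and an action on it;
    values outside the domain are irrelevant. *)
Record op := Op { dom : H -> Prop; app : H -> H }.

Definition op_eq (A B : op) : Prop :=
  (forall x, dom A x <-> dom B x) /\ (forall x, dom A x -> app A x = app B x).

Definition linear_op (A : op) : Prop :=
  subspace (dom A) /\
  forall (a : R[i]) x y, dom A x -> dom A y -> app A (a *: x + y) = a *: app A x + app A y.

Definition op_range (A : op) : H -> Prop := fun y => exists x, dom A x /\ app A x = y.
Definition kernel (A : op) : H -> Prop := fun x => dom A x /\ app A x = 0.

Definition densely_defined (A : op) : Prop := linear_op A /\ dense_set (dom A).

Definition closed_op (A : op) : Prop :=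
  forall u x y, (forall n, dom A (u n)) -> seq_cvg u x -> seq_cvg (fun n => app A (u n)) y ->
    dom A x /\ app A x = y.

Definition closed_range (A : op) : Prop := closed_set (op_range A).

Definition bounded_op (A : op) : Prop :=
  (forall x, dom A x) /\ linear_op A /\
  exists M : R, forall x, hnorm (app A x) <= M * hnorm x.

Definition adj_dom (A : op) : H -> Prop :=
  fun y => exists z, forall x, dom A x -> ip (app A x) y = ip x z.

Definition adjoint (A : op) : op :=
  Op (adj_dom A)
     (fun y => epsilon (inhabits (0 : H))
                 (fun z => forall x, dom A x -> ip (app A x) y = ip x z)).

Definition EP (A : op) : Prop :=
  closed_range A /\ set_eq (op_range A) (op_range (adjoint A)).

Definition op_comp (A B : op) : op :=
  Op (fun x => dom B x /\ dom A (app B x)) (fun x => app A (app B x)).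

Definition coim (A : op) : H -> Prop := fun x => dom A x /\ orth (kernel A) x.

(** Moore--Penrose inverse: defined on R(A) ⊕ R(A)^⊥, with
    A^† (A x + y2) = x for x ∈ C(A), y2 ∈ R(A)^⊥. *)
Definition mp_inv (A : op) : op :=
  Op (fun y => exists y1 y2, op_range A y1 /\ orth (op_range A) y2 /\ y = y1 + y2)
     (fun y => epsilon (inhabits (0 : H))
                 (fun x => exists y2, coim A x /\ orth (op_range A) y2 /\ y = app A x + y2)).

(** generalized Cauchy dual  w(A) = A (A^* A)^† *)
Definition cdual (A : op) : op := op_comp A (mp_inv (op_comp (adjoint A) A)).

End Hilbert.

(* Main.v *)
Require Import Defs.
From mathcomp Require Import all_boot all_order all_algebra.
From mathcomp Require Import reals complex.
From mathcomp Require Import ring lra.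
From mathcomp Require Import classical_sets.
From Stdlib Require Import ClassicalEpsilon.

Set Implicit Arguments.
Unset Strict Implicit.
Unset Printing Implicit Defensive.

Import Order.TTheory GRing.Theory Num.Theory.
Local Open Scope ring_scope.
Local Open Scope complex_scope.

Section Basics.
Variables (R : realType) (H : lmodType R[i]) (ip : H -> H -> R[i]).
Hypothesis hip : is_inner_product ip.

Lemma conjE (x : R[i]) : Num.conj x = (conjc x). Proof. by []. Qed.
Lemma conjcM (a b : R[i]) : (conjc (a * b)) = (conjc a) * (conjc b). Proof. exact: rmorphM. Qed.
Lemma conjcD (a b : R[i]) : (conjc (a + b)) = (conjc a) + (conjc b). Proof. exact: rmorphD. Qed.
Lemma conjcN (a : R[i]) : (conjc (- a)) = - (conjc a). Proof. exact: rmorphN. Qed.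
Lemma conjcB (a b : R[i]) : (conjc (a - b)) = (conjc a) - (conjc b). Proof. exact: rmorphB. Qed.
Lemma conjcV (a : R[i]) : (conjc (a^-1)) = ((conjc a))^-1. Proof. exact: fmorphV. Qed.
Lemma conjc0' : (conjc (0 : R[i])) = 0. Proof. exact: rmorph0. Qed.


Lemma ipJ x y : ip y x = (conjc (ip x y)).
Proof. by case: hip. Qed.

Lemma ipLl a x y z : ip (a *: x + y) z = a * ip x z + ip y z.
Proof. by case: hip. Qed.

Lemma ip0l z : ip 0 z = 0.
Proof.
have := ipLl 1 0 0 z; rewrite scaler0 addr0 mul1r => h.
have: ip 0 z + ip 0 z - ip 0 z = ip 0 z - ip 0 z by rewrite -h.
by rewrite addrK subrr.
Qed.

Lemma ipDl x y z : ip (x + y) z = ip x z + ip y z.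
Proof. by rewrite -(scale1r x) ipLl mul1r scale1r. Qed.

Lemma ipZl a x z : ip (a *: x) z = a * ip x z.
Proof. by rewrite -(addr0 (a *: x)) ipLl ip0l addr0. Qed.

Lemma ipNl x z : ip (- x) z = - ip x z.
Proof. by rewrite -scaleN1r ipZl mulN1r. Qed.

Lemma ipBl x y z : ip (x - y) z = ip x z - ip y z.
Proof. by rewrite ipDl ipNl. Qed.

Lemma ip0r z : ip z 0 = 0.
Proof. by rewrite ipJ ip0l rmorph0. Qed.

Lemma ipDr x y z : ip z (x + y) = ip z x + ip z y.
Proof. by rewrite [ip z x]ipJ [ip z y]ipJ ipJ ipDl rmorphD. Qed.

Lemma ipZr a x z : ip z (a *: x) = (conjc a) * ip z x.
Proof. by rewrite [ip z x]ipJ ipJ ipZl rmorphM. Qed.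

Lemma ipNr x z : ip z (- x) = - ip z x.
Proof. by rewrite [ip z x]ipJ ipJ ipNl rmorphN. Qed.

Lemma ipBr x y z : ip z (x - y) = ip z x - ip z y.
Proof. by rewrite ipDr ipNr. Qed.

Definition ipE := (ipDl, ipDr, ipBl, ipBr, ipNl, ipNr, ipZl, ipZr, ip0l, ip0r).

Lemma ip_def x : ip x x = 0 -> x = 0.
Proof. by case: hip => _ _ _; apply. Qed.

Lemma ipxx_real x : ip x x = (complex.Re (ip x x))%:C.
Proof.
have := ipJ x x; case: (ip x x) => a b /= [] hb.
by congr Complex; lra.
Qed.

Lemma ipxx_ge0 x : 0 <= ip x x.
Proof. rewrite ipxx_real ler0c; by case: hip => _ _ + _; apply. Qed.

Lemma ipxx_conj x : (conjc (ip x x)) = ip x x.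
Proof. by rewrite -ipJ. Qed.

Lemma ipxx_eq0 x : (ip x x == 0) = (x == 0).
Proof.
apply/eqP/eqP; first exact: ip_def.
by move=> ->; rewrite ip0l.
Qed.

Lemma ipxx_gt0 x : x != 0 -> 0 < ip x x.
Proof. by move=> nx; rewrite lt_def ipxx_ge0 ipxx_eq0 nx. Qed.

Lemma conj_real_inv (a : R[i]) : (conjc a) = a -> (conjc (a^-1)) = a^-1.
Proof. by move=> h; rewrite conjcV h. Qed.

Lemma ip_key w z : ip z z != 0 ->
  ip (w - (ip w z / ip z z) *: z) (w - (ip w z / ip z z) *: z) =
  ip w w - ip w z * (conjc (ip w z)) / ip z z.
Proof.
move=> nz.
rewrite !ipE conjcM (conj_real_inv (ipxx_conj z)) [ip z w]ipJ.
field; done.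
Qed.

Lemma CS w z : ip w z * (conjc (ip w z)) <= ip w w * ip z z.
Proof.
have [z0|nz] := eqVneq z 0.
  by rewrite z0 !ip0r mul0r mulr0.
have nzz : ip z z != 0 by rewrite ipxx_eq0.
have := ipxx_ge0 (w - (ip w z / ip z z) *: z); rewrite ip_key // subr_ge0.
by rewrite ler_pdivrMr ?ipxx_gt0.
Qed.


Local Notation n2 x := (complex.Re (ip x x)).

Lemma RC_D (a b : R) : (a + b)%:C = a%:C + b%:C :> R[i]. Proof. exact: rmorphD. Qed.
Lemma RC_B (a b : R) : (a - b)%:C = a%:C - b%:C :> R[i]. Proof. exact: rmorphB. Qed.
Lemma RC_M (a b : R) : (a * b)%:C = a%:C * b%:C :> R[i]. Proof. exact: rmorphM. Qed.
Lemma RC_n (n : nat) : (n%:R : R)%:C = n%:R :> R[i]. Proof. exact: rmorph_nat. Qed.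
Lemma RC_0 : (0 : R)%:C = 0 :> R[i]. Proof. by []. Qed.

Lemma n2_ge0 x : 0 <= n2 x.
Proof. by case: hip => _ _ + _; apply. Qed.

Lemma n2_eq0 x : n2 x = 0 -> x = 0.
Proof. by move=> h; apply: ip_def; rewrite ipxx_real h. Qed.

Lemma n20 : n2 (0 : H) = 0.
Proof. by rewrite ip0l. Qed.

Lemma hnormE x : hnorm ip x = Num.sqrt (n2 x). Proof. by []. Qed.

Lemma hnorm_lt x e : 0 < e -> (hnorm ip x < e) = (n2 x < e ^+ 2).
Proof.
move=> e0; rewrite hnormE -(ltr_sqrt (n2 x)) ?exprn_gt0 // sqrtr_sqr.
by rewrite ger0_norm ?ltW.
Qed.

Lemma eq0_small v : (forall e, 0 < e -> n2 v < e) -> v = 0.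
Proof.
move=> h; apply: n2_eq0; apply/eqP; rewrite eq_le n2_ge0 andbT.
apply/negP => /negP; rewrite -ltNge => hp.
by have := h _ hp; rewrite ltxx.
Qed.

Lemma n2_small v : (forall e, 0 < e -> exists N, forall n, (N <= n)%N -> n2 v < e) -> v = 0.
Proof.
move=> h; apply: eq0_small => e e0; have [N hN] := h e e0; exact: hN N (leqnn N).
Qed.

Definition mc (c : R[i]) := complex.Re (c * conjc c).

Lemma mcE c : c * conjc c = (mc c)%:C.
Proof. by case: c => a b; rewrite /mc /=; congr Complex => /=; ring. Qed.

Lemma mc_ge0 c : 0 <= mc c.
Proof. case: c => a b; rewrite /mc /=; nra. Qed.

Lemma mc_eq0 c : mc c = 0 -> c = 0.
Proof.
case: c => a b; rewrite /mc /= => h.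
have ha : a = 0 by nra.
have hb : b = 0 by nra.
by rewrite ha hb.
Qed.

Lemma mcN c : mc (- c) = mc c.
Proof. by case: c => a b; rewrite /mc /=; ring. Qed.

Lemma CS_R w z : mc (ip w z) <= n2 w * n2 z.
Proof.
have := CS w z; rewrite mcE [ip w w]ipxx_real [ip z z]ipxx_real -RC_M lecR //.
Qed.


Lemma ReD (a b : R[i]) : complex.Re (a + b) = complex.Re a + complex.Re b.
Proof. by case: a; case: b. Qed.
Lemma ReN (a : R[i]) : complex.Re (- a) = - complex.Re a.
Proof. by case: a. Qed.
Lemma ReB (a b : R[i]) : complex.Re (a - b) = complex.Re a - complex.Re b.
Proof. by rewrite ReD ReN. Qed.
Lemma ReMr (r : R) (a : R[i]) : complex.Re (r%:C * a) = r * complex.Re a.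
Proof. by case: a => x y /=; ring. Qed.
Lemma ReJ (a : R[i]) : complex.Re (conjc a) = complex.Re a.
Proof. by case: a. Qed.
Lemma Re_nat n (a : R[i]) : complex.Re (n%:R * a) = n%:R * complex.Re a.
Proof. by rewrite -RC_n ReMr. Qed.

Lemma Re_ipJ a b : complex.Re (ip b a) = complex.Re (ip a b).
Proof. by rewrite ipJ; case: (ip a b). Qed.

Lemma n2D a b : n2 (a + b) = n2 a + n2 b + 2 * complex.Re (ip a b).
Proof.
rewrite !ipE !ReD (Re_ipJ a b); ring.
Qed.

Lemma n2B a b : n2 (a - b) = n2 a + n2 b - 2 * complex.Re (ip a b).
Proof.
rewrite !ipE !(ReD, ReN) (Re_ipJ a b); ring.
Qed.

Lemma n2Zr (r : R) a : n2 (r%:C *: a) = r ^+ 2 * n2 a.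
Proof.
rewrite !ipE conjc_real -mulrA ReMr ReMr; ring.
Qed.

Lemma ReZr (r : R) a b : complex.Re (ip (r%:C *: a) b) = r * complex.Re (ip a b).
Proof. by rewrite ipZl ReMr. Qed.

Lemma re_bound a b (s : R) : 0 < s ->
  2 * complex.Re (ip a b) <= s * n2 a + s^-1 * n2 b.
Proof.
move=> s0.
have h := n2_ge0 (s%:C *: a - b).
rewrite n2B n2Zr ReZr in h.
have hs' : 0 < s^-1 by rewrite invr_gt0.
have: 0 <= s^-1 * (s ^+ 2 * n2 a + n2 b - 2 * (s * complex.Re (ip a b))).
  by rewrite mulr_ge0 // ltW.
have -> : s^-1 * (s ^+ 2 * n2 a + n2 b - 2 * (s * complex.Re (ip a b))) =
  s * n2 a + s^-1 * n2 b - 2 * complex.Re (ip a b).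
  by field; rewrite gt_eqF.
by rewrite subr_ge0.
Qed.

Lemma small_inv (e : R) : 0 < e -> exists N : nat, forall n, (N <= n)%N -> n.+1%:R^-1 < e.
Proof.
move=> e0; exists (Num.Def.archi_bound e^-1) => n hn.
rewrite -[e]invrK ltf_pV2 ?posrE ?invr_gt0 ?ltr0n //.
apply: (lt_le_trans (archi_boundP _)); first by rewrite invr_ge0 ltW.
by rewrite ler_nat; apply: (leq_trans hn).
Qed.

Lemma ip_cvg u x z : seq_cvg ip u x -> forall e, 0 < e ->
  exists N, forall n, (N <= n)%N -> mc (ip (u n) z - ip x z) < e.
Proof.
move=> hu e e0.
have Z0 := n2_ge0 z.
pose d := Num.min 1 (e / (n2 z + 1)).
have d0 : 0 < d by rewrite lt_min ltr01 divr_gt0 // ltr_pwDr.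
have d1 : d <= 1 by rewrite ge_min lexx.
have d2 : d * (n2 z + 1) <= e.
  by rewrite -ler_pdivlMr ?ltr_pwDr // ge_min lexx orbT.
have [N hN] := hu d d0; exists N => n hn.
have := hN n hn; rewrite hnorm_lt // => h.
rewrite -ipBl.
have := CS_R (u n - x) z.
have := n2_ge0 (u n - x).
nra.
Qed.

Lemma parallelogram y a b :
  n2 (a - b) + 4 * n2 (y - (2^-1 : R[i]) *: (a + b)) = 2 * n2 (y - a) + 2 * n2 (y - b).
Proof.
have hc : conjc (2^-1 : R[i]) = 2^-1 by rewrite conjcV conjc_nat.
have h2 : (2 : R[i]) != 0 by rewrite pnatr_eq0.
have E : ip (a - b) (a - b) + 4%:R * ip (y - (2^-1 : R[i]) *: (a + b)) (y - (2^-1 : R[i]) *: (a + b))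
   = 2%:R * ip (y - a) (y - a) + 2%:R * ip (y - b) (y - b).
  rewrite !ipE hc; field; done.
have := congr1 (@complex.Re R) E.
by rewrite !ReD !Re_nat.
Qed.

Lemma proj_thm (hc : complete_ip ip) K : subspace K -> closed_set ip K ->
  forall y, exists k, K k /\ orth ip K (y - k).
Proof.
case=> K0 KL Kc y.
have KD a b : K a -> K b -> K (a + b).
  by move=> ha hb; rewrite -(scale1r a); apply: KL.
have KZ a b : K b -> K (a *: b).
  by move=> hb; rewrite -(addr0 (a *: b)); apply: KL.
pose D : set R := fun r => exists k, K k /\ r = n2 (y - k).
have D0 : (D !=set0)%classic by exists (n2 (y - 0)), 0.
have Dlb : has_lbound D by exists 0 => r [k [_ ->]]; exact: n2_ge0.
set d := inf D.
have hd k : K k -> d <= n2 (y - k) by move=> hk; apply: (ge_inf Dlb); exists k.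
have d0 : 0 <= d by apply: lb_le_inf => // r [k [_ ->]]; exact: n2_ge0.
have hseq n : exists k, K k /\ n2 (y - k) < d + n.+1%:R^-1.
  have hlt : d < d + n.+1%:R^-1 by rewrite ltrDl invr_gt0 ltr0n.
  have [r [k [hk ->]] hr] := inf_lt D0 hlt.
  by exists k.
pose ks n := proj1_sig (constructive_indefinite_description _ (hseq n)).
have hks n : K (ks n) /\ n2 (y - ks n) < d + n.+1%:R^-1
  := proj2_sig (constructive_indefinite_description _ (hseq n)).
have cauchy : cauchy_seq ip ks.
  move=> e e0.
  have e4 : 0 < e ^+ 2 / 4 by rewrite divr_gt0 // exprn_gt0.
  have [N hN] := small_inv e4.
  exists N => m n hm hn.
  rewrite hnorm_lt //.
  have := parallelogram y (ks m) (ks n).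
  have := hd _ (KZ (2^-1) _ (KD _ _ (proj1 (hks m)) (proj1 (hks n)))).
  have := proj2 (hks m); have := proj2 (hks n).
  have := hN m hm; have := hN n hn.
  move: (n2 (ks m - ks n)) (n2 (y - 2^-1 *: (ks m + ks n))) (n2 (y - ks m)) (n2 (y - ks n)) => A P Am An.
  move: (n.+1%:R^-1) (m.+1%:R^-1) (e ^+ 2) => a b c.
  clear -d0.
  move: d d0 => dd _.
  lra.
have [k hk] := hc _ cauchy.
have Kk : K k by apply: (Kc ks) => // n; exact: proj1 (hks n).
have mink : n2 (y - k) <= d.
  apply/ler_addgt0Pr => eps eps0.
  pose t := Num.min 1 (eps / (d + 4)).
  have t0 : 0 < t by rewrite lt_min ltr01 divr_gt0 // ltr_wpDl.
  have t1 : t <= 1 by rewrite ge_min lexx.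
  have t2 : t * (d + 4) <= eps.
    by rewrite -ler_pdivlMr ?ltr_wpDl // ge_min lexx orbT.
  have [N1 hN1] := small_inv t0.
  have [N2 hN2] := hk t t0.
  pose n := maxn N1 N2.
  have h1 := hN1 n (leq_maxl _ _).
  have h2 := hN2 n (leq_maxr _ _); rewrite hnorm_lt // in h2.
  have h3 := proj2 (hks n).
  have E : y - k = (y - ks n) + (ks n - k) by rewrite addrA subrK.
  rewrite E n2D.
  have h4 := re_bound (y - ks n) (ks n - k) t0.
  have tt : t * t^-1 = 1 by rewrite divff // gt_eqF.
  have h5 : t^-1 * n2 (ks n - k) <= t.
    rewrite ler_pdivrMl //; apply: ltW; by rewrite -expr2.
  have ta : t * n2 (y - ks n) <= t * (d + t).
    by rewrite ler_pM2l // ltW // (lt_trans h3) // ltrD2l.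
  have tt2 : t ^+ 2 <= t by rewrite expr2 ler_piMl // ltW.
  have := n2_ge0 (y - ks n); have := n2_ge0 (ks n - k).
  move: ta tt2 h1 h2 h3 h4 h5 t1 t2 t0.
  rewrite expr2 !mulrDr.
  move: (t * n2 (y - ks n)) (t * d) (t * t) (t^-1 * n2 (ks n - k)) => p q r s.
  move: (n2 (y - ks n)) (n2 (ks n - k)) (complex.Re (ip (y - ks n) (ks n - k))) (n.+1%:R^-1) => A B C u.
  clearbody t; clear; move: t d => t dd.
  lra.
move: Kk => Kk; exists k; split => // z Kz.
set w := y - k.
have [->|nz] := eqVneq z 0; first by rewrite ip0l.
have Nz : ip z z != 0 by rewrite ipxx_eq0.
have Kk' : K (k + (ip w z / ip z z) *: z) by apply: KD => //; exact: KZ.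
have := hd _ Kk'.
have -> : y - (k + (ip w z / ip z z) *: z) = w - (ip w z / ip z z) *: z.
  by rewrite /w opprD addrA.
move=> hm.
have : n2 w <= n2 (w - (ip w z / ip z z) *: z) by apply: le_trans hm.
rewrite -lecR -!ipxx_real ip_key // -subr_ge0 addrC addKr oppr_ge0.
rewrite ler_pdivrMr ?ipxx_gt0 // mul0r mcE -RC_0 lecR => hmc.
have c0 : ip w z = 0 by apply: mc_eq0; apply/eqP; rewrite eq_le hmc mc_ge0.
by rewrite ipJ c0 conjc0'.
Qed.


Section Lin.
Variable A : op H.
Hypothesis hA : linear_op A.

Lemma dom0 : dom A 0. Proof. by case: hA => [[]]. Qed.
Lemma domL a x y : dom A x -> dom A y -> dom A (a *: x + y).
Proof. by case: hA => [[_ h] _]; apply: h. Qed.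
Lemma domB x y : dom A x -> dom A y -> dom A (x - y).
Proof. by move=> hx hy; rewrite addrC -scaleN1r; apply: domL. Qed.
Lemma domZ a x : dom A x -> dom A (a *: x).
Proof. by move=> hx; rewrite -(addr0 (a *: x)); apply: domL => //; apply: dom0. Qed.
Lemma domD x y : dom A x -> dom A y -> dom A (x + y).
Proof. by move=> hx hy; rewrite -(scale1r x); apply: domL. Qed.
Lemma appL a x y : dom A x -> dom A y -> app A (a *: x + y) = a *: app A x + app A y.
Proof. by case: hA => _ h; apply: h. Qed.
Lemma app0 : app A 0 = 0.
Proof.
have := appL (-1) dom0 dom0.
by rewrite scaler0 addr0 scaleN1r addNr.
Qed.
Lemma appB x y : dom A x -> dom A y -> app A (x - y) = app A x - app A y.
Proof.
move=> hx hy; rewrite addrC -scaleN1r appL // scaleN1r addrC //.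
Qed.
Lemma appD x y : dom A x -> dom A y -> app A (x + y) = app A x + app A y.
Proof. by move=> hx hy; have := appL 1 hx hy; rewrite !scale1r. Qed.
Lemma appZ a x : dom A x -> app A (a *: x) = a *: app A x.
Proof.
move=> hx; rewrite -(addr0 (a *: x)) appL //; last exact: dom0.
by rewrite app0 addr0.
Qed.

Lemma kernel_subspace : subspace (kernel A).
Proof.
split; first by split; [exact: dom0 | exact: app0].
move=> a x y [hx ex] [hy ey]; split; first exact: domL.
by rewrite appL // ex ey scaler0 addr0.
Qed.

Lemma range_subspace : subspace (op_range A).
Proof.
split; first by exists 0; split; [exact: dom0 | exact: app0].
move=> a _ _ [x [hx <-]] [y [hy <-]]; exists (a *: x + y); split.
  exact: domL.
exact: appL.
Qed.
End Lin.

Lemma cvg_bounded S u x : bounded_op ip S -> seq_cvg ip u x ->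
  seq_cvg ip (fun n => app S (u n)) (app S x).
Proof.
case=> Sd [Sl [M hM]] hu e e0.
pose dl := e / (`|M| + 1).
have dl0 : 0 < dl by rewrite divr_gt0 // ltr_pwDr.
have dle : `|M| * dl + dl = e.
  by rewrite /dl; field; rewrite gt_eqF // ltr_pwDr.
have [N hN] := hu dl dl0; exists N => n hn /=.
rewrite -appB //.
have h1 := hM (u n - x).
have h2 := hN n hn.
have h3 : 0 <= hnorm ip (u n - x) by apply: sqrtr_ge0.
have h4 : M * hnorm ip (u n - x) <= `|M| * hnorm ip (u n - x).
  by rewrite ler_wpM2r // ler_norm.
have h5 : `|M| * hnorm ip (u n - x) <= `|M| * dl.
  by rewrite ler_wpM2l // ltW.
have h6 : 0 <= `|M| := normr_ge0 M.
move: h1 h2 h3 h4 h5 h6 dle dl0.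
move: (hnorm ip (app S (u n - x))) (hnorm ip (u n - x)) (M * hnorm ip (u n - x))
  (`|M| * hnorm ip (u n - x)) (`|M| * dl) `|M| => a b c c' f g.
clear; move: dl => q.
lra.
Qed.

Lemma closed_kernel_closed T : closed_op ip T -> closed_set ip (kernel T).
Proof.
move=> hT u x hu hx.
have := hT u x 0 (fun n => proj1 (hu n)) hx.
apply => e e0; exists 0%N => n _.
rewrite (proj2 (hu n)) subrr hnorm_lt // ip0l; exact: exprn_gt0.
Qed.

Lemma closed_set_eq (P Q : H -> Prop) : set_eq P Q -> closed_set ip P -> closed_set ip Q.
Proof.
move=> e hP u x hu hx; apply/e; apply: (hP u) => // n; exact/e.
Qed.

Lemma subspace_eq (P Q : H -> Prop) : set_eq P Q -> subspace P -> subspace Q.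
Proof.
move=> e [h0 hL]; split; first exact/e.
by move=> a x y /e hx /e hy; apply/e; apply: hL.
Qed.

Lemma orth_eq (P Q : H -> Prop) v : set_eq P Q -> orth ip P v -> orth ip Q v.
Proof. by move=> e hP z /e; apply: hP. Qed.


Lemma conjcK' (a : R[i]) : conjc (conjc a) = a.
Proof. by case: a => x y /=; rewrite opprK. Qed.

Lemma mc_small c : (forall e, 0 < e -> mc c < e) -> c = 0.
Proof.
move=> h; apply: mc_eq0; apply/eqP; rewrite eq_le mc_ge0 andbT.
apply/negP => /negP; rewrite -ltNge => hp.
by have := h _ hp; rewrite ltxx.
Qed.

Lemma riesz (hc : complete_ip ip) S : bounded_op ip S ->
  forall y, exists z, forall x, ip (app S x) y = ip x z.
Proof.
move=> hS y; have [Sd [Sl _]] := hS.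
pose f x := ip (app S x) y.
pose K := fun x => f x = 0.
have fL a x x' : f (a *: x + x') = a * f x + f x'.
  by rewrite /f appL // ipLl.
have f0 : f 0 = 0 by rewrite /f app0 // ip0l.
have fB x x' : f (x - x') = f x - f x'.
  by rewrite addrC -scaleN1r fL mulN1r addrC.
have Ksub : subspace K.
  split; first exact: f0.
  by move=> a x x'; rewrite /K fL => -> ->; rewrite mulr0 addr0.
have Kc : closed_set ip K.
  move=> u x hu hx.
  have hSu := cvg_bounded hS hx.
  apply: mc_small => e e0.
  have [N hN] := ip_cvg y hSu e0.
  have := hN N (leqnn N).
  by rewrite [ip (app S (u N)) y](hu N) sub0r mcN.
case: (Classical_Prop.classic (forall x, f x = 0)) => [hall | hnall].
  by exists 0 => x; rewrite ip0r; apply: hall.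
have [x0 hx0] := Classical_Pred_Type.not_all_ex_not _ _ hnall.
have [k [Kk ok]] := proj_thm hc Ksub Kc x0.
set w := x0 - k.
have fw : f w = f x0 by rewrite /w fB Kk subr0.
have fw0 : f w != 0 by rewrite fw; apply/eqP.
have wn0 : w != 0 by apply: contra fw0 => /eqP ->; rewrite f0.
have Nw : ip w w != 0 by rewrite ipxx_eq0.
exists ((conjc (f w) / ip w w) *: w) => x.
have Kx : K (x - (f x / f w) *: w).
  by rewrite /K fB /f appZ // ipZl -/(f w) divfK // subrr.
have := ok _ Kx; rewrite ipBl ipZl => /eqP; rewrite subr_eq0 => /eqP hxw.
rewrite ipZr conjcM conjcV conjcK' ipxx_conj hxw.
rewrite -/(f x); field.
by apply/andP; split.
Qed.

Lemma adj_spec (A : op H) y : adj_dom ip A y ->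
  forall x, dom A x -> ip (app A x) y = ip x (app (adjoint ip A) y).
Proof. move=> hy; exact: (epsilon_spec (inhabits 0) _ hy). Qed.

Lemma dense_zero (D : H -> Prop) d : dense_set ip D -> (forall x, D x -> ip x d = 0) -> d = 0.
Proof.
move=> hD h; have [u [hu hcv]] := hD d.
apply: eq0_small => e e0.
have se : 0 < Num.sqrt e by rewrite sqrtr_gt0.
have [N hN] := hcv _ se.
have := hN N (leqnn N); rewrite hnorm_lt // sqr_sqrtr ?ltW // n2B (h _ (hu N)).
have := n2_ge0 (u N); rewrite /=; lra.
Qed.

Lemma adj_uniq (A : op H) y z : dense_set ip (dom A) ->
  (forall x, dom A x -> ip (app A x) y = ip x z) ->
  adj_dom ip A y /\ app (adjoint ip A) y = z.
Proof.
move=> hd hz.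
have hy : adj_dom ip A y by exists z.
split => //.
apply/eqP; rewrite -subr_eq0; apply/eqP.
apply: (dense_zero hd) => x hx.
by rewrite ipBr -adj_spec // hz // subrr.
Qed.

Lemma adj_B (A : op H) a b : dense_set ip (dom A) ->
  adj_dom ip A a -> adj_dom ip A b ->
  adj_dom ip A (a - b) /\ app (adjoint ip A) (a - b) = app (adjoint ip A) a - app (adjoint ip A) b.
Proof.
move=> hd ha hb; apply: adj_uniq => // x hx.
by rewrite ipBr ipBr !adj_spec.
Qed.

Lemma adj_zero (A : op H) : dense_set ip (dom A) ->
  adj_dom ip A 0 /\ app (adjoint ip A) 0 = 0.
Proof. by move=> hd; apply: adj_uniq => // x _; rewrite !ip0r. Qed.

Section MP.
Variable C : op H.
Hypothesis hCl : linear_op C.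
Hypothesis hCd : dense_set ip (dom C).
Hypothesis hCp : forall x, exists n, kernel C n /\ orth ip (kernel C) (x - n).

Local Notation A := (op_comp (adjoint ip C) C).

Lemma kerA x : kernel A x <-> kernel C x.
Proof.
split.
  move=> [[dC dA] eA]; split => //.
  apply: ip_def; rewrite (adj_spec dA dC); move: eA => /= ->; exact: ip0r.
move=> [dC eC]; have [h0 e0] := adj_zero hCd.
by split; [split => //; rewrite eC | rewrite /= eC].
Qed.

Lemma mp_spec y : dom (mp_inv ip A) y -> exists y2,
  coim ip A (app (mp_inv ip A) y) /\ orth ip (op_range A) y2 /\
  y = app A (app (mp_inv ip A) y) + y2.
Proof.
move=> [y1 [y2 [[x0 [dx0 ex0]] [oy2 ey]]]].
apply: (epsilon_spec (inhabits (0 : H))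
  (fun x => exists y2, coim ip A x /\ orth ip (op_range A) y2 /\ y = app A x + y2)).
have [n [[dn en] on]] := hCp x0.
have dC0 : dom C x0 := dx0.1.
have eC : app C (x0 - n) = app C x0 by rewrite appB // en subr0.
exists (x0 - n), y2.
split; [split|split => //].
- split; first by apply: domB => //; exact: dx0.1.
  by rewrite eC; exact: dx0.2.
- by apply: orth_eq on => z; split => /kerA.
- by rewrite ey -ex0 /= eC.
Qed.

Lemma mp_dom_coim y : dom (mp_inv ip A) y -> coim ip A (app (mp_inv ip A) y).
Proof. by move=> /mp_spec [y2 [h _]]. Qed.

Lemma mp_val y y1 y2 : op_range A y1 -> orth ip (op_range A) y2 -> y = y1 + y2 ->
  app A (app (mp_inv ip A) y) = y1.
Proof.
move=> r1 o2 ey.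
have hd : dom (mp_inv ip A) y by exists y1, y2.
have [y2' [[hx _] [o2' ey']]] := mp_spec hd.
set x := app (mp_inv ip A) y in hx ey' *.
have rx : op_range A (app A x) by exists x.
have E : app A x - y1 = y2 - y2'.
  have h : y1 + y2 = app A x + y2' by rewrite -ey -ey'.
  have -> : app A x = y1 + y2 - y2' by rewrite h addrK.
  by rewrite addrAC [y1 + y2]addrC addrK.
apply/eqP; rewrite -subr_eq0; apply/eqP; apply: ip_def.
rewrite {2}E ipBl !ipBr (o2 _ rx) (o2' _ rx) (o2 _ r1) (o2' _ r1).
by rewrite !subrr.
Qed.

End MP.


Lemma bounded_kernel_closed S : bounded_op ip S -> closed_set ip (kernel S).
Proof.
move=> hS u x hu hx; have [Sd [Sl _]] := hS; split => //.
have hc := cvg_bounded hS hx.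
apply: eq0_small => e e0.
have se : 0 < Num.sqrt e by rewrite sqrtr_gt0.
have [N hN] := hc _ se; have := hN N (leqnn N).
by rewrite /= (proj2 (hu N)) sub0r hnorm_lt // sqr_sqrtr ?ltW // ipNl ipNr opprK.
Qed.

Lemma mp_dom_eq (X Y : op H) y : set_eq (op_range X) (op_range Y) ->
  dom (mp_inv ip X) y -> dom (mp_inv ip Y) y.
Proof.
move=> e [y1 [y2 [r1 [o2 ey]]]]; exists y1, y2; split; first exact/e.
split => //; apply: orth_eq o2; exact: e.
Qed.

Lemma proj_closed_sub (hc : complete_ip ip) (P : H -> Prop) :
  subspace P -> closed_set ip P -> forall x, exists n, P n /\ orth ip P (x - n).
Proof. by move=> hs hcl x; apply: proj_thm. Qed.

Section Main.
Variables T S : op H.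
Hypothesis hc : complete_ip ip.
Hypothesis hTl : linear_op T.
Hypothesis hTd : dense_set ip (dom T).
Hypothesis hTc : closed_op ip T.
Hypothesis hS : bounded_op ip S.
Hypothesis hEP : EP ip S.
Hypothesis hRT : set_eq (op_range S) (op_range T).

Local Notation ST := (op_comp S T).
Local Notation M := (op_range S).

Lemma Sd x : dom S x. Proof. by case: hS. Qed.
Lemma Sl : linear_op S. Proof. by case: hS => _ []. Qed.

Lemma S_dense : dense_set ip (dom S).
Proof.
move=> x; exists (fun _ => x); split => [n|]; first exact: Sd.
move=> e e0; exists 0%N => n _; rewrite subrr hnorm_lt // ip0l; exact: exprn_gt0.
Qed.

Lemma ST_lin : linear_op ST.
Proof.
split.
  split; first by split; [exact: dom0 | exact: Sd].
  by move=> a x y [hx _] [hy _]; split; [exact: domL | exact: Sd].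
move=> a x y [hx _] [hy _] /=.
have Sl' := Sl.
by rewrite appL // appL //; exact: Sd.
Qed.

Lemma ST_dense : dense_set ip (dom ST).
Proof.
move=> x; have [u [hu hcv]] := hTd x; exists u; split => // n.
by split; [exact: hu | exact: Sd].
Qed.

Lemma Sadj y : adj_dom ip S y.
Proof. by have [z hz] := riesz hc hS y; exists z => x _; exact: hz. Qed.

Lemma Sspec x y : ip (app S x) y = ip x (app (adjoint ip S) y).
Proof. by apply: adj_spec; [exact: Sadj | exact: Sd]. Qed.

Lemma SadjB a b : app (adjoint ip S) (a - b) = app (adjoint ip S) a - app (adjoint ip S) b.
Proof. by have [_ ->] := adj_B S_dense (Sadj a) (Sadj b). Qed.

Lemma M_adj m : M m <-> exists y, app (adjoint ip S) y = m.
Proof.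
split.
  by move=> /(proj2 hEP) [y [hy <-]]; exists y.
by move=> [y <-]; apply/(proj2 hEP); exists y; split => //; exact: Sadj.
Qed.

Lemma M_inj m : M m -> app S m = 0 -> m = 0.
Proof.
move=> /M_adj [y <-] e; apply: ip_def.
by rewrite ipJ -Sspec e ip0l conjc0'.
Qed.

Lemma orthM_ker z : orth ip M z -> app S z = 0.
Proof.
move=> oz.
have h y : ip (app S z) y = 0.
  rewrite Sspec ipJ (oz _ _) ?conjc0' //; apply/M_adj; by exists y.
by apply: ip_def; apply: h.
Qed.

Lemma M_closed : closed_set ip M. Proof. exact: (proj1 hEP). Qed.
Lemma M_sub : subspace M. Proof. exact: range_subspace Sl. Qed.

Lemma projM x : exists m, M m /\ orth ip M (x - m).
Proof.
have h1 := M_sub; have h2 := M_closed.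
by have [k [hk ok]] := proj_thm hc h1 h2 x; exists k.
Qed.

Lemma kerST x : kernel ST x <-> kernel T x.
Proof.
split.
  move=> [[dT _] e]; split => //; apply: M_inj => //.
  by apply/hRT; exists x.
by move=> [dT e]; split; [split => //; exact: Sd | rewrite /= e app0 //; exact: Sl].
Qed.

Lemma projKT x : exists n, kernel T n /\ orth ip (kernel T) (x - n).
Proof.
have h1 := kernel_subspace hTl. have h2 := @closed_kernel_closed T hTc.
by have [k [hk ok]] := proj_thm hc h1 h2 x; exists k.
Qed.

Lemma projKST x : exists n, kernel ST n /\ orth ip (kernel ST) (x - n).
Proof.
have e : set_eq (kernel T) (kernel ST) by move=> z; split => /kerST.
have h1 := subspace_eq e (kernel_subspace hTl).
have h2 := closed_set_eq e (@closed_kernel_closed T hTc).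
by have [k [hk ok]] := proj_thm hc h1 h2 x; exists k.
Qed.

Lemma projKS x : exists n, kernel S n /\ orth ip (kernel S) (x - n).
Proof.
have h1 := kernel_subspace Sl; have h2 := @bounded_kernel_closed S hS.
by have [k [hk ok]] := proj_thm hc h1 h2 x; exists k.
Qed.

Lemma F3 m : M m -> exists x, dom T x /\ app (adjoint ip S) (app S (app T x)) = m.
Proof.
move=> /M_adj [y <-].
have [p [Mp op]] := projM y.
have e1 : app (adjoint ip S) (y - p) = 0.
  apply: ip_def; rewrite -Sspec; apply: op; by exists (app (adjoint ip S) (y - p)); split => //; exact: Sd.
have e2 : app (adjoint ip S) p = app (adjoint ip S) y.
  by apply/eqP; rewrite eq_sym -subr_eq0 -SadjB e1.
move: Mp => [x1 [_ ex1]].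
have [q [Mq oq]] := projM x1.
have e3 : app S q = p.
  have Sl' := Sl.
  have := orthM_ker oq; rewrite appB //; try exact: Sd.
  by move=> /eqP; rewrite subr_eq0 => /eqP <-.
have [x2 [dx2 ex2]] := proj1 (hRT q) Mq.
exists x2; split => //.
by rewrite ex2 e3 e2.
Qed.

Local Notation Aop := (op_comp (adjoint ip T) T).
Local Notation Bop := (op_comp (adjoint ip ST) ST).
Local Notation Qop := (op_comp (adjoint ip S) S).
Local Notation Sa := (app (adjoint ip S)).

Lemma F5a w : adj_dom ip T (Sa w) ->
  adj_dom ip ST w /\ app (adjoint ip ST) w = app (adjoint ip T) (Sa w).
Proof.
move=> h; apply: adj_uniq; first exact: ST_dense.
by move=> x [dT _] /=; rewrite Sspec (adj_spec h dT).
Qed.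

Lemma F5b w : adj_dom ip ST w ->
  adj_dom ip T (Sa w) /\ app (adjoint ip T) (Sa w) = app (adjoint ip ST) w.
Proof.
move=> h; apply: adj_uniq => // x dT.
rewrite -Sspec.
have dST : dom ST x by split; [exact: dT | exact: Sd].
exact: (adj_spec h dST).
Qed.

Lemma F6 : set_eq (op_range Bop) (op_range Aop).
Proof.
move=> y; split.
  move=> [x [[[dT dS] dadj] <-]] /=.
  have [h1 h2] := F5b dadj.
  have Mw : M (Sa (app S (app T x))) by apply/M_adj; eexists.
  have [x' [dx' ex']] := proj1 (hRT _) Mw.
  exists x'; split; first by split => //; rewrite ex'.
  by rewrite /= ex'; exact: h2.
move=> [x [[dT dadj] <-]] /=.
have MT : M (app T x) by apply/hRT; exists x.
have [x2 [dx2 ex2]] := F3 MT.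
have hw : adj_dom ip T (Sa (app S (app T x2))) by rewrite ex2.
have [h1 h2] := F5a hw.
exists x2; split; first by split => //; split => //; exact: Sd.
by apply: (etrans h2); rewrite ex2.
Qed.

Lemma FQ m : M m -> op_range Qop m.
Proof.
move=> /F3 [x [dx e]]; exists (app T x); split => //.
by split; [exact: Sd | exact: Sadj].
Qed.

Lemma main_eq : op_eq (cdual ip ST) (op_comp (cdual ip S) (cdual ip T)).
Proof.
have F6' : set_eq (op_range Aop) (op_range Bop) by move=> z; split => /F6.
have Sl' := Sl.
have domQ v : dom T v -> dom (mp_inv ip Qop) (app T v).
  move=> dv; exists (app T v), 0; split.
    by apply: FQ; apply/hRT; exists v.
  by split; [move=> s _; exact: ip0r | rewrite addr0].
split.
  move=> y; split.
    move=> [hB dST].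
    have hA : dom (mp_inv ip Aop) y := mp_dom_eq F6 hB.
    have [[dTv _] _] := mp_dom_coim hTl hTd projKT hA.
    split; first by split.
    by split; [exact: domQ | exact: Sd].
  move=> [[hA dTv] _].
  have hB : dom (mp_inv ip Bop) y := mp_dom_eq F6' hA.
  split => //.
  by have [[dST _] _] := mp_dom_coim ST_lin ST_dense projKST hB.
move=> y [hB dST] /=.
set u := app (mp_inv ip Bop) y.
set v := app (mp_inv ip Aop) y.
have [y1 [y2 [r1 [o2 ey]]]] := hB.
have eB : app Bop u = y1 := mp_val ST_lin ST_dense projKST r1 o2 ey.
have eA : app Aop v = y1 :=
  mp_val hTl hTd projKT (proj1 (F6 y1) r1) (orth_eq F6 o2) ey.
have hA : dom (mp_inv ip Aop) y := mp_dom_eq F6 hB.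
have [[dTv dAv] _] := mp_dom_coim hTl hTd projKT hA.
have MTv : M (app T v) by apply/hRT; exists v.
set p := app (mp_inv ip Qop) (app T v).
have o0 : orth ip (op_range Qop) 0 by move=> s _; exact: ip0r.
have eQ : app Qop p = app T v :=
  mp_val Sl S_dense projKS (FQ MTv) o0 (esym (addr0 _)).
have [[[dTu dSu] dBu] _] := mp_dom_coim ST_lin ST_dense projKST hB.
have [h1 h2] := F5b dBu.
have Mw : M (Sa (app S (app T u))) by apply/M_adj; eexists.
have [u' [du' eu']] := proj1 (hRT _) Mw.
have [hw ew] := adj_B hTd h1 dAv.
have ew0 : app (adjoint ip T) (Sa (app S (app T u)) - app T v) = 0.
  by rewrite ew h2; move: eB eA => /= -> ->; exact: subrr.
have E : Sa (app S (app T u)) - app T v = app T (u' - v) by rewrite appB // eu'.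
have wz : Sa (app S (app T u)) - app T v = 0.
  apply: ip_def; rewrite {1}E (adj_spec hw (domB hTl du' dTv)) ew0; exact: ip0r.
have eSS : Sa (app S (app T u)) = Sa (app S p).
  by move/eqP: wz; rewrite subr_eq0 => /eqP ->; rewrite -eQ.
have dz : Sa (app S (app T u) - app S p) = 0 by rewrite SadjB eSS subrr.
apply/eqP; rewrite -subr_eq0; apply/eqP; apply: ip_def.
rewrite {1}(_ : app S (app T u) - app S p = app S (app T u - p)); last first.
  by rewrite appB //; exact: Sd.
by rewrite Sspec dz ip0r.
Qed.

End Main.

End Basics.

Theorem theorem2p21 (R : realType) (H : lmodType R[i]) (ip : H -> H -> R[i])
  (HH : is_Hilbert ip) (T S : op H) :
  densely_defined ip T -> closed_op ip T -> closed_range ip T ->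
  bounded_op ip S -> EP ip S ->
  set_eq (op_range S) (op_range T) ->
  op_eq (cdual ip (op_comp S T)) (op_comp (cdual ip S) (cdual ip T)).
Proof.
move=> [hTl hTd] hTc _ hS hEP hRT.
case: HH => hip hc.
exact: (main_eq hip hc hTl hTd hTc hS hEP hRT).
Qed.
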